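(* For an integer $g\ge1$, the number of numerical semigroups of genus $g$ that are both reflective and symmetric equals $1$ if $g=1$, and equals $\tau(g-1)-1$ if $g>1$, where $\tau(n)$ denotes the number of positive divisors of $n$.
   Context: A numerical semigroup is a submonoid $S$ of $(\mathbb{N}_0,+)$ with finite complement; its genus is the number of elements of $\mathbb{N}_0\setminus S$ and $\mathrm{F}(S)$ is its largest gap. $S$ is symmetric if for every $z\in\mathbb{Z}$ exactly one of $z$ and $\mathrm{F}(S)-z$ lies in $S$. A numerical semigroup $S$ of genus $g\ge1$ is called reflective if for every $z\in\{0,1,\dots,g-1\}$ exactly one of $z$ and $z+g$ belongs to $S$. *)

(* Defs.v *)
From mathcomp Require Import all_boot all_algebra.
Set Implicit Arguments. Unset Strict Implicit. Unset Printing Implicit Defensive.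

Definition is_numsg (S : nat -> bool) : Prop :=
  [/\ S 0, (forall a b, S a -> S b -> S (a + b)) & exists N, forall n, N <= n -> S n].

(* genus = number of gaps; gaps all lie below some bound N, so count them below N *)
Definition has_genus (S : nat -> bool) (g : nat) : Prop :=
  exists N, (forall n, N <= n -> S n) /\ count (fun n => ~~ S n) (iota 0 N) = g.

Definition is_frobenius (S : nat -> bool) (F : nat) : Prop :=
  ~~ S F /\ forall n, F < n -> S n.

Definition in_S (S : nat -> bool) (z : int) : bool :=
  match z with Posz n => S n | Negz _ => false end.

Definition symmetric_sg (S : nat -> bool) : Prop :=
  exists F, is_frobenius S F /\
    forall z : int, in_S S z (+) in_S S ((Posz F - z)%R).

Definition reflective_sg (S : nat -> bool) (g : nat) : Prop :=
  1 <= g /\ has_genus S g /\ forall z, z < g -> S z (+) S (z + g).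

Definition tau (n : nat) : nat := size (divisors n).

(* "the number of objects S (up to extensional equality) with property P is k":
   an enumeration f 0, ..., f (k-1) of pairwise (extensionally) distinct solutions
   covering every solution up to extensional equality. *)
Definition num_sols (P : (nat -> bool) -> Prop) (k : nat) : Prop :=
  exists f : nat -> (nat -> bool),
    [/\ forall i, i < k -> P (f i),
        forall i j, i < k -> j < k -> i <> j -> exists n, f i n <> f j n
      & forall S, P S -> exists2 i, i < k & forall n, S n = f i n].

(* Main.v *)
Require Import Defs.
From mathcomp Require Import all_boot all_algebra zify.

Lemma count_refl (p : pred nat) m :
  count (fun n => p (m - n)) (iota 0 m.+1) = count p (iota 0 m.+1).
Proof.
elim: m => [|m IH]; first by [].
have E : iota 0 m.+2 = iota 0 m.+1 ++ [:: m.+1] by rewrite -addn1 iotaD.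
have E2 : iota 0 m.+2 = 0 :: map succn (iota 0 m.+1) by rewrite /= -(iotaDl 1).
have C : forall (q : pred nat) s, count q (0 :: map succn s) = q 0 + count (fun n => q n.+1) s.
  by move=> q s; rewrite [LHS]/= count_map.
rewrite [in RHS]E count_cat -IH E2 C.
rewrite subn0 [count _ [:: _]]/= addn0 addnC; congr (_ + _).
Qed.

Definition Sd (g d n : nat) : bool :=
  if n < g then d %| n else if n < 2 * g then ~~ (d %| (n - g)) else true.

Section SdProps.
Variables (g d : nat) (Hg : 0 < g) (Hd : 1 < d) (Hdg : d %| g.-1).

Lemma Sd_lo n : n < g -> Sd g d n = (d %| n).
Proof. by move=> H; rewrite /Sd H. Qed.
Lemma Sd_mid n : g <= n < 2 * g -> Sd g d n = ~~ (d %| (n - g)).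
Proof. by case/andP=> H1 H2; rewrite /Sd H2 ltnNge H1. Qed.
Lemma Sd_hi n : 2 * g <= n -> Sd g d n.
Proof. by move=> H; rewrite /Sd ifF ?ifF //; apply/negbTE; rewrite -leqNgt //; lia. Qed.

Lemma keyK x : d %| x -> g <= x -> ~~ (d %| x - g).
Proof.
move=> Hx Hgx; apply/negP => H.
have H1 : d %| x.-1.
  have -> : x.-1 = x - g + g.-1 by lia.
  by rewrite dvdn_add.
have : d %| x.-1 + 1.
  by have -> : x.-1 + 1 = x by lia.
rewrite dvdn_addr // dvdn1 => /eqP E; lia.
Qed.

Lemma Sd_add a b : Sd g d a -> Sd g d b -> Sd g d (a + b).
Proof.
have [Hab|Hab] := leqP (2 * g) (a + b); first by move=> _ _; exact: Sd_hi.
have [Ha|Ha] := ltnP a g; have [Hb|Hb] := ltnP b g.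
- rewrite (Sd_lo _ Ha) (Sd_lo _ Hb) => da db.
  have [Hs|Hs] := ltnP (a + b) g; first by rewrite Sd_lo // dvdn_add.
  rewrite Sd_mid ?Hs ?Hab //; apply: keyK => //; exact: dvdn_add.
- rewrite (Sd_lo _ Ha) (Sd_mid b); last by lia.
  move=> da db; rewrite Sd_mid; last by lia.
  have -> : a + b - g = a + (b - g) by lia.
  by rewrite dvdn_addr.
- rewrite (Sd_lo _ Hb) (Sd_mid a); last by lia.
  move=> da db; rewrite Sd_mid; last by lia.
  have -> : a + b - g = b + (a - g) by lia.
  by rewrite dvdn_addr.
- lia.
Qed.

Lemma Sd_count : count (fun n => ~~ Sd g d n) (iota 0 (2 * g)) = g.
Proof.
have -> : 2 * g = g + g by lia.
rewrite iotaD count_cat.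
have -> : iota (0 + g) g = map (addn g) (iota 0 g) by rewrite -iotaDl addn0.
rewrite count_map.
rewrite -[in RHS](size_iota 0 g) -(count_predC (fun n => ~~ Sd g d n)).
congr (_ + _); apply: eq_in_count => n; rewrite mem_iota add0n => /andP[_ Hn] /=.
rewrite Sd_mid; last by lia.
by rewrite addKn Sd_lo.
Qed.

Lemma Sd_numsg : is_numsg (Sd g d).
Proof.
split; first by rewrite Sd_lo.
- exact: Sd_add.
- by exists (2 * g) => n; apply: Sd_hi.
Qed.

Lemma Sd_genus : has_genus (Sd g d) g.
Proof. by exists (2 * g); split; [exact: Sd_hi | exact: Sd_count]. Qed.

Lemma Sd_refl : reflective_sg (Sd g d) g.
Proof.
split=> //; split; first exact: Sd_genus.
move=> z Hz; rewrite Sd_lo // Sd_mid; last by lia.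
by rewrite addnK; case: (d %| z).
Qed.

Lemma Sd_sym : symmetric_sg (Sd g d).
Proof.
exists (2 * g).-1; split.
  split; first by rewrite Sd_mid; [rewrite negbK; have -> : (2 * g).-1 - g = g.-1 by lia | lia].
  by move=> n Hn; apply: Sd_hi; lia.
case=> [n|k].
- have [Hn|Hn] := leqP n (2 * g).-1.
  + rewrite /= subzn //=.
    have [Hn2|Hn2] := ltnP n g.
    * rewrite Sd_lo // Sd_mid; last by lia.
      have -> : (2 * g).-1 - n - g = g.-1 - n by lia.
      have Hng : n <= g.-1 by lia.
      by rewrite (dvdn_subr Hng Hdg); case: (d %| n).
    * rewrite Sd_mid; last by lia.
      rewrite Sd_lo; last by lia.
      have -> : (2 * g).-1 - n = g.-1 - (n - g) by lia.
      have Hng : n - g <= g.-1 by lia.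
      by rewrite (dvdn_subr Hng Hdg); case: (d %| n - g).
  + have -> : (Posz ((2 * g).-1)%N - Posz n)%R = Negz (n - (2 * g).-1).-1.
      rewrite NegzE; have -> : (n - (2 * g).-1).-1.+1 = n - (2 * g).-1 by lia.
      by rewrite -subzn ?GRing.opprB //; lia.
    by rewrite /= Sd_hi //; lia.
- have -> : (Posz ((2 * g).-1)%N - Negz k)%R = Posz ((2 * g).-1 + k.+1)%N.
    by rewrite NegzE GRing.opprK.
  by rewrite /= Sd_hi //; lia.
Qed.

End SdProps.

Section Complete.
Variables (S : nat -> bool) (g F : nat).
Hypotheses (Hg : 0 < g) (Hnum : is_numsg S) (Hgen : has_genus S g)
  (Hrefl : forall z, z < g -> S z (+) S (z + g))
  (HF : is_frobenius S F)
  (Hsym : forall z : int, in_S S z (+) in_S S ((Posz F - z)%R)).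

Lemma S0 : S 0. Proof. by case: Hnum. Qed.
Lemma Sadd a b : S a -> S b -> S (a + b). Proof. by case: Hnum => _ H _; apply: H. Qed.

Lemma cnt2g : count (fun n => ~~ S n) (iota 0 (2 * g)) = g.
Proof.
have -> : 2 * g = g + g by lia.
rewrite iotaD count_cat.
have -> : iota (0 + g) g = map (addn g) (iota 0 g) by rewrite -iotaDl addn0.
rewrite count_map.
rewrite -[in RHS](size_iota 0 g) -(count_predC S) addnC.
congr (_ + _); apply: eq_in_count => n; rewrite mem_iota add0n => /andP[_ Hn] /=.
by move: (Hrefl _ Hn); rewrite [n + g]addnC; case: (S n); case: (S (g + n)).
Qed.

Lemma Shi n : 2 * g <= n -> S n.
Proof.
move=> Hn; apply/negPn/negP => Hs.
case: Hgen => N [HN Hc].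
have HnN : n < N by rewrite ltnNge; apply/negP => /HN; rewrite (negbTE Hs).
have E : N = 2 * g + (N - 2 * g) by lia.
move: Hc; rewrite E iotaD count_cat cnt2g add0n => H.
have : 0 < count (fun n => ~~ S n) (iota (2 * g) (N - 2 * g)).
  rewrite -has_count; apply/hasP; exists n => //.
  rewrite mem_iota; apply/andP; split=> //; lia.
lia.
Qed.

Lemma symF n : n <= F -> S n (+) S (F - n).
Proof. by move=> Hn; move: (Hsym (Posz n)); rewrite subzn. Qed.

Lemma F_eq : F = (2 * g).-1.
Proof.
case: HF => HFn HFgt.
have HF2 : F < 2 * g by rewrite ltnNge; apply/negP => /Shi; rewrite (negbTE HFn).
have E : 2 * g = F.+1 + (2 * g - F.+1) by lia.
have C := cnt2g; move: C; rewrite E iotaD count_cat add0n.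
rewrite (@eq_in_count _ _ pred0 (iota F.+1 _)); last first.
  by move=> n; rewrite mem_iota => /andP[H1 _] /=; rewrite HFgt.
rewrite count_pred0 addn0 => C.
have C2 : count (fun n => ~~ S n) (iota 0 F.+1) = count S (iota 0 F.+1).
  rewrite -count_refl; apply: eq_in_count => n; rewrite mem_iota add0n => /andP[_ Hn].
  by move: (symF _ Hn); case: (S n); case: (S (F - n)).
have := count_predC S (iota 0 F.+1); rewrite size_iota.
have -> : count (predC S) (iota 0 F.+1) = count (fun n => ~~ S n) (iota 0 F.+1) by [].
lia.
Qed.

Lemma mirror z : z < g -> S z = S (g.-1 - z).
Proof.
move=> Hz.
have Hz' : z <= F by rewrite F_eq; lia.
move: (symF _ Hz'); rewrite F_eq.
have -> : (2 * g).-1 - z = g.-1 - z + g by lia.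
have : g.-1 - z < g by lia.
move/Hrefl; case: (S z); case: (S (g.-1 - z)); case: (S (g.-1 - z + g)) => //.
Qed.

Lemma Sdiff a b : a <= b -> b < g -> S a -> S b -> S (b - a).
Proof.
move=> Hab Hb Sa Sb.
have H1 : S (g.-1 - b) by rewrite -mirror.
have H2 := Sadd _ _ H1 Sa.
rewrite mirror in H2; last by lia.
by have <- : g.-1 - (g.-1 - b + a) = b - a by lia.
Qed.

Lemma Smul d : S d -> forall k, S (k * d).
Proof. by move=> Sd; elim=> [|k IH]; [rewrite mul0n S0 | rewrite mulSnr Sadd]. Qed.

Lemma char_g1 : g = 1 -> forall n, S n = Sd 1 2 n.
Proof.
move=> E n; case: n => [|[|n]].
- by rewrite S0.
- by move: (Hrefl 0 Hg); rewrite E add0n S0 /= => /negbTE.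
- by rewrite Shi // E; lia.
Qed.

Lemma char_g2 : 1 < g -> exists d, [/\ 1 < d, d %| g.-1 & forall n, S n = Sd g d n].
Proof.
move=> Hg2.
have Sg1 : S g.-1 by rewrite -(subn0 g.-1) -mirror // S0.
have exP : exists n, (0 < n) && S n by exists g.-1; rewrite Sg1 andbT; lia.
case: (ex_minnP exP) => d /andP[d0 Sdd] Hmin.
have red : forall z, z < g -> S z = (d %| z).
  move=> z Hz; apply/idP/idP; last by move/divnK <-; apply: Smul.
  move=> Sz.
  have K : forall k, k * d <= z -> S (z - k * d).
    elim=> [|k IH] Hk; first by rewrite mul0n subn0.
    have -> : z - k.+1 * d = (z - k * d) - d by rewrite mulSnr; lia.
    apply: Sdiff => //; [rewrite mulSnr in Hk; lia | lia | apply: IH; rewrite mulSnr in Hk; lia].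
  have := K (z %/ d) (leq_trunc_div z d).
  have -> : z - z %/ d * d = z %% d by rewrite {1}(divn_eq z d); lia.
  move=> Smod; rewrite /dvdn; apply/eqP.
  case: (posnP (z %% d)) => // Hpos.
  have := Hmin _ (introT andP (conj Hpos Smod)).
  by rewrite leqNgt ltn_pmod.
have dg : d %| g.-1 by rewrite -red //; lia.
exists d; split=> //.
- case: (ltngtP d 1) => // [|E]; first lia.
  have := Sadd _ _ Sg1 Sdd; rewrite E (_ : g.-1 + 1 = 0 + g); last lia.
  by move: (Hrefl _ Hg); rewrite S0 => /= /negbTE ->.
- move=> n; have [Hn|Hn] := ltnP n g; first by rewrite red // /Sd Hn.
  have [Hn2|Hn2] := ltnP n (2 * g); last by rewrite Shi // /Sd ifF ?ifF //; apply/negbTE; rewrite -leqNgt //; lia.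
  rewrite /Sd ltnNge Hn Hn2 /= -red; last by lia.
  have : n - g < g by lia.
  move/Hrefl; rewrite subnK //; by case: (S n); case: (S (n - g)).
Qed.

End Complete.

Lemma divisors_head n : 0 < n -> divisors n = 1 :: behead (divisors n).
Proof.
move=> Hn; have H1 := divisor1 n.
have Hs := sorted_divisors_ltn n.
case E: (divisors n) H1 Hs => [|x s] //= H1 Hs.
case: (eqVneq x 1) => [->//|Hx].
have Hx1 : 1 \in s by move: H1; rewrite inE eq_sym (negbTE Hx).
have := order_path_min ltn_trans Hs => /allP /(_ 1 Hx1).
rewrite ltnS leqn0 => /eqP Ex0.
have : x \in divisors n by rewrite E mem_head.
by rewrite -dvdn_divisors // Ex0 dvd0n => /eqP Hn0; move: Hn; rewrite Hn0.
Qed.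

Theorem mainTheorem16 (g : nat) : 1 <= g ->
  num_sols (fun S => [/\ is_numsg S, has_genus S g, reflective_sg S g & symmetric_sg S])
           (if g == 1 then 1 else (tau g.-1).-1).
Proof.
move=> Hg; case: (eqVneq g 1) => [E|Hg1].
  subst g; exists (fun _ => Sd 1 2); split.
  - move=> i _; have H2 : 2 %| (1 : nat).-1 by [].
    by split; [apply: Sd_numsg | apply: Sd_genus | apply: Sd_refl | apply: Sd_sym].
  - by move=> i j; rewrite !ltnS !leqn0 => /eqP -> /eqP ->.
  - move=> S [Hn Hgen [_ [_ Hr]] [F [HF Hs]]]; exists 0 => // n.
    by rewrite (@char_g1 S 1 isT Hn Hgen Hr (erefl 1)).
have Hg2 : 1 < g by rewrite ltn_neqAle eq_sym Hg1 Hg.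
have Hgp : 0 < g.-1 by rewrite -ltnS prednK.
set L := behead (divisors g.-1).
have EL := divisors_head _ Hgp; rewrite -/L in EL.
have Hsize : (tau g.-1).-1 = size L by rewrite /tau EL.
have Hmem : forall y, y \in L -> 1 < y /\ y %| g.-1.
  move=> y Hy.
  have Hyd : y \in divisors g.-1 by rewrite EL inE Hy orbT.
  rewrite -dvdn_divisors // in Hyd; split=> //.
  have := divisors_uniq g.-1; rewrite EL /= => /andP[H1L _].
  case: (ltngtP y 1) => // [|Ey]; last by move: H1L; rewrite -Ey Hy.
  rewrite ltnS leqn0 => /eqP Ey; move: Hyd; rewrite Ey dvd0n => /eqP Hz.
  by move: Hgp; rewrite Hz.
exists (fun i => Sd g (nth 2 L i)); rewrite Hsize; split.
- move=> i Hi; have [H1 H2] := Hmem _ (mem_nth 2 Hi).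
  by split; [apply: Sd_numsg | apply: Sd_genus | apply: Sd_refl | apply: Sd_sym].
- move=> i j Hi Hj Hij.
  have Hu : uniq L by have := divisors_uniq g.-1; rewrite EL /= => /andP[].
  have Hne : nth 2 L i != nth 2 L j by rewrite nth_uniq //; apply/eqP.
  have [Hi1 Hi2] := Hmem _ (mem_nth 2 Hi).
  have [Hj1 Hj2] := Hmem _ (mem_nth 2 Hj).
  have Hile' := dvdn_leq Hgp Hi2.
  have Hile : nth 2 L i < g by move: Hile'; case: (g) Hg2 => // g0 _ /=; rewrite ltnS.
  have Hjle' := dvdn_leq Hgp Hj2.
  have Hjle : nth 2 L j < g by move: Hjle'; case: (g) Hg2 => // g0 _ /=; rewrite ltnS.
  case: (ltngtP (nth 2 L i) (nth 2 L j)) => [Hlt|Hlt|Heq]; last by move: Hne; rewrite Heq eqxx.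
  + exists (nth 2 L i); rewrite /Sd Hile dvdnn => /esym /(dvdn_leq (ltnW Hi1)).
    by rewrite leqNgt Hlt.
  + exists (nth 2 L j); rewrite /Sd Hjle dvdnn => /(dvdn_leq (ltnW Hj1)).
    by rewrite leqNgt Hlt.
- move=> S [Hn Hgen [_ [_ Hr]] [F [HF Hs]]].
  have [d [Hd1 Hdg HS]] := @char_g2 S g F Hg Hn Hgen Hr HF Hs Hg2.
  have HdL : d \in L.
    have : d \in divisors g.-1 by rewrite -dvdn_divisors.
    by rewrite EL inE => /orP[/eqP E1|//]; move: Hd1; rewrite E1.
  exists (index d L); first by rewrite index_mem.
  by move=> n; rewrite nth_index.
Qed.
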